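(* Let $R$ be a commutative noetherian ring and $M$ an $R$-module. Then the following are equivalent: (i) $M$ is a finitely generated $R$-module; (ii) $M_\mathfrak{m}$ is a finitely generated $R_\mathfrak{m}$-module for every maximal ideal $\mathfrak{m}$ of $R$, and for every finitely generated submodule $N\subseteq M$ the set $\operatorname{Min}_R(M/N)$ of minimal elements of $\operatorname{Supp}_R(M/N)$ is finite.
   Context: $\operatorname{Min}_R(X)$ denotes the set of minimal prime ideals in the support $\operatorname{Supp}_R(X)$ of an $R$-module $X$. *)

(* Defs.v *)
From HB Require Import structures.
From mathcomp Require Import all_boot all_order all_algebra.
Set Implicit Arguments. Unset Strict Implicit. Unset Printing Implicit Defensive.
Import GRing.Theory.
Local Open Scope ring_scope.

Section CommAlg.
Variable R : comPzRingType.
Variable M : lmodType R.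

Definition is_ideal (I : R -> Prop) : Prop :=
  [/\ I 0, (forall a b, I a -> I b -> I (a + b)) & (forall r a, I a -> I (r * a))].

Definition ideal_fg (I : R -> Prop) : Prop :=
  exists n (g : 'I_n -> R), forall x,
    I x <-> exists c : 'I_n -> R, x = \sum_(i < n) c i * g i.

Definition noetherian : Prop := forall I, is_ideal I -> ideal_fg I.

Definition is_prime (P : R -> Prop) : Prop :=
  [/\ is_ideal P, ~ P 1 & forall a b, P (a * b) -> P a \/ P b].

Definition is_maximal (m : R -> Prop) : Prop :=
  [/\ is_ideal m, ~ m 1 &
      forall J, is_ideal J -> (forall x, m x -> J x) ->
        (forall x, J x <-> m x) \/ J 1].

Definition is_submod (N : M -> Prop) : Prop :=
  [/\ N 0, (forall x y, N x -> N y -> N (x + y)) & (forall r x, N x -> N (r *: x))].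

Definition submod_fg (N : M -> Prop) : Prop :=
  exists n (g : 'I_n -> M), forall y,
    N y <-> exists c : 'I_n -> R, y = \sum_(i < n) c i *: g i.

Definition module_fg : Prop :=
  exists n (g : 'I_n -> M), forall y, exists c : 'I_n -> R, y = \sum_(i < n) c i *: g i.

(* Localization M_p at a prime p: fractions x/s (pairs (x,s), s \notin p)
   modulo (x,s) ~ (y,t) iff u (t x - s y) = 0 for some u \notin p. *)
Definition frac_eq (p : R -> Prop) (a b : M * R) : Prop :=
  exists u, ~ p u /\ u *: (b.2 *: a.1 - a.2 *: b.1) = 0.

Definition frac_add (a b : M * R) : M * R := (b.2 *: a.1 + a.2 *: b.1, a.2 * b.2).
Definition frac_zero : M * R := (0, 1).
(* action of the fraction r/t of R_p on x/s *)
Definition frac_scale (rt : R * R) (a : M * R) : M * R := (rt.1 *: a.1, rt.2 * a.2).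

(* M_p is a finitely generated R_p-module *)
Definition loc_fg (p : R -> Prop) : Prop :=
  exists n (g : 'I_n -> M) (d : 'I_n -> R), (forall i, ~ p (d i)) /\
    forall (y : M) (t : R), ~ p t ->
      exists (a b : 'I_n -> R), (forall i, ~ p (b i)) /\
        frac_eq p (y, t)
          (\big[frac_add/frac_zero]_(i < n) frac_scale (a i, b i) (g i, d i)).

(* (M/N)_p <> 0: some fraction (x mod N)/s is nonzero in (M/N)_p, i.e.
   there is no u \notin p with u x = 0 in M/N (i.e. u *: x \in N). *)
Definition loc_quot_nonzero (N : M -> Prop) (p : R -> Prop) : Prop :=
  exists (x : M) (s : R), ~ p s /\ forall u, ~ p u -> ~ N (u *: x).

Definition in_supp_quot (N : M -> Prop) (p : R -> Prop) : Prop :=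
  is_prime p /\ loc_quot_nonzero N p.

Definition in_min_quot (N : M -> Prop) (p : R -> Prop) : Prop :=
  in_supp_quot N p /\
  forall q, in_supp_quot N q -> (forall x, q x -> p x) -> forall x, p x -> q x.

Definition finite_ideal_set (S : (R -> Prop) -> Prop) : Prop :=
  exists n (f : 'I_n -> (R -> Prop)),
    forall p, S p -> exists i, forall x, p x <-> f i x.

End CommAlg.

(* Main.v *)
Require Import Defs.
From HB Require Import structures.
From mathcomp Require Import all_boot all_order all_algebra.
From Stdlib Require Import Classical ClassicalEpsilon.
From Stdlib Require List.
Set Implicit Arguments. Unset Strict Implicit. Unset Printing Implicit Defensive.
Import GRing.Theory.
Local Open Scope ring_scope.

Definition sub {T : Type} (A B : T -> Prop) := forall x, A x -> B x.

Lemma ideal_sum {R : comPzRingType} (I : R -> Prop) n (c g : 'I_n -> R) :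
  is_ideal I -> (forall i, I (g i)) -> I (\sum_(i < n) c i * g i).
Proof.
case=> I0 ID IM Hg; apply: (big_ind I) => // i _; exact: IM.
Qed.

Lemma ideal_mulr {R : comPzRingType} (I : R -> Prop) a b :
  is_ideal I -> I a -> I (a * b).
Proof. by case=> _ _ IM Ia; rewrite mulrC; apply: IM. Qed.

Lemma prime_prod {R : comPzRingType} (p : R -> Prop) n (u : 'I_n -> R) :
  is_prime p -> (forall i, ~ p (u i)) -> ~ p (\prod_(i < n) u i).
Proof.
case=> _ p1 pm Hu; apply: (big_ind (fun x => ~ p x)) => //.
by move=> x y Hx Hy /pm [].
Qed.

Lemma prime_mul {R : comPzRingType} (p : R -> Prop) a b :
  is_prime p -> ~ p a -> ~ p b -> ~ p (a * b).
Proof. by case=> _ _ pm Ha Hb /pm []. Qed.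

Lemma noeth_ind {R : comPzRingType} (P : (R -> Prop) -> Prop) :
  noetherian R ->
  (forall I, is_ideal I ->
     (forall J, is_ideal J -> sub I J -> (exists x, J x /\ ~ I x) -> P J) -> P I) ->
  forall I, is_ideal I -> P I.
Proof.
move=> HN Hstep I0 HI0; apply: NNPP => HP0.
pose S := {I : R -> Prop | is_ideal I /\ ~ P I}.
have Hnext : forall s : S, exists s' : S,
    sub (proj1_sig s) (proj1_sig s') /\ exists x, proj1_sig s' x /\ ~ proj1_sig s x.
  move=> [I [HI HPI]] /=; apply: NNPP => Hno; apply: HPI; apply: Hstep => // J HJ sIJ ex.
  apply: NNPP => HPJ; apply: Hno; by exists (exist _ J (conj HJ HPJ)).
pose next := fun s => proj1_sig (constructive_indefinite_description _ (Hnext s)).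
have Hn : forall s, sub (proj1_sig s) (proj1_sig (next s)) /\
   exists x, proj1_sig (next s) x /\ ~ proj1_sig s x.
  move=> s; exact: (proj2_sig (constructive_indefinite_description _ (Hnext s))).
pose c := fun n => iter n next (exist _ I0 (conj HI0 HP0)).
have cid : forall n, is_ideal (proj1_sig (c n)).
  by move=> n; case: (c n) => ? [].
have cmono : forall n m, (n <= m)%N -> sub (proj1_sig (c n)) (proj1_sig (c m)).
  move=> n m /subnKC <-; elim: (m - n)%N => [|k IH]; first by rewrite addn0.
  move=> x /IH; rewrite addnS /c /= => H; exact: (proj1 (Hn _) _ H).
pose U := fun x => exists n, proj1_sig (c n) x.
have UI : is_ideal U.
  split.
  - by exists 0%N; case: (cid 0%N).
  - move=> a b [n Ha] [m Hb]; exists (maxn n m).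
    case: (cid (maxn n m)) => _ ID _; apply: ID.
    + by apply: cmono Ha; rewrite leq_maxl.
    + by apply: cmono Hb; rewrite leq_maxr.
  - move=> r a [n Ha]; exists n; by case: (cid n) => _ _ IM; apply: IM.
have [k [g Hg]] := HN U UI.
have gin : forall i, exists n, proj1_sig (c n) (g i).
  move=> i; apply/(Hg (g i)); exists (fun j => if j == i then 1 else 0).
  rewrite (bigD1 i) //= eqxx mul1r big1 ?addr0 // => j /negbTE ->; by rewrite mul0r.
pose nf := fun i => proj1_sig (constructive_indefinite_description _ (gin i)).
have nfP : forall i, proj1_sig (c (nf i)) (g i).
  move=> i; exact: (proj2_sig (constructive_indefinite_description _ (gin i))).
pose N := (\max_(i < k) nf i)%N.
have UcN : sub U (proj1_sig (c N)).
  move=> x /Hg [cc ->]; apply: ideal_sum => // i; apply: cmono (nfP i).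
  exact: (leq_bigmax i).
have [_ [x [Hx Hnx]]] := Hn (c N).
apply: Hnx; apply: UcN; by exists N.+1.
Qed.

Lemma exists_maximal {R : comPzRingType} (I : R -> Prop) :
  noetherian R -> is_ideal I -> ~ I 1 -> exists m, is_maximal m /\ sub I m.
Proof.
move=> HN; move: I; apply: (@noeth_ind R (fun I => ~ I 1 -> exists m, is_maximal m /\ sub I m)) => //.
move=> I HI IH HI1.
case: (classic (is_maximal I)) => [Hm|Hm]; first by exists I; split => // x.
have : exists J, is_ideal J /\ sub I J /\ ~ (forall x, J x <-> I x) /\ ~ J 1.
  apply: NNPP => Hno; apply: Hm; split => // J HJ sIJ.
  case: (classic (J 1)) => [|HJ1]; first by right.
  left; apply: NNPP => Hne; apply: Hno; by exists J.
move=> [J [HJ [sIJ [Hne HJ1]]]].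
have [m [Hmm sJm]] : exists m, is_maximal m /\ sub J m.
  apply: IH => //; apply: NNPP => Hno; apply: Hne => x; split; last exact: sIJ.
  move=> Jx; apply: NNPP => Ix; apply: Hno; by exists x.
by exists m; split => // x /sIJ /sJm.
Qed.

Lemma maximal_prime {R : comPzRingType} (m : R -> Prop) : is_maximal m -> is_prime m.
Proof.
move=> [Hm m1 Hmax]; split => // a b Hab.
apply: NNPP => /not_or_and [Ha Hb].
pose J := fun x => exists i r, m i /\ x = i + r * a.
have HJ : is_ideal J.
  case: Hm => m0 mD mM; split.
  - by exists 0, 0; rewrite mul0r addr0.
  - move=> x y [i [r [Hi ->]]] [j [s [Hj ->]]]; exists (i + j), (r + s); split; first exact: mD.
    by rewrite mulrDl addrACA.
  - move=> r x [i [s [Hi ->]]]; exists (r * i), (r * s); split; first exact: mM.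
    by rewrite mulrDr mulrA.
have sJ : forall x, m x -> J x by move=> x Hx; exists x, 0; split => //; rewrite mul0r addr0.
case: (Hmax J HJ sJ) => [HJm|[i [r [Hi Hir]]]].
  apply: Ha; apply: (proj1 (HJm a)); exists 0, 1; split; [by case: Hm | by rewrite mul1r add0r].
apply: Hb; case: Hm => m0 mD mM.
have -> : b = b * i + r * (a * b).
  by rewrite -{1}[b]mulr1 {1}Hir mulrDr [b * (r * a)]mulrCA [b * a]mulrC.
apply: mD; exact: mM.
Qed.

Lemma prime_ideal {R : comPzRingType} (p : R -> Prop) : is_prime p -> is_ideal p.
Proof. by case. Qed.

Lemma primes_over {R : comPzRingType} (J : R -> Prop) :
  noetherian R -> is_ideal J ->
  exists L : list (R -> Prop),
    (forall p, List.In p L -> is_prime p /\ sub J p) /\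
    forall q, is_prime q -> sub J q -> exists p, List.In p L /\ sub p q.
Proof.
move=> HN; move: J; apply: noeth_ind => // I HI IH.
case: (classic (I 1)) => [I1|I1].
  exists nil; split => // q [_ q1 _] sIq; by case: q1; apply: sIq.
case: (classic (is_prime I)) => [Ip|Inp].
  exists (cons I nil); split.
    by move=> p [<-|[]]; split.
  by move=> q _ sIq; exists I; split => //; left.
have [a [b [Iab [Ia Ib]]]] : exists a b, I (a * b) /\ ~ I a /\ ~ I b.
  apply: NNPP => Hno; apply: Inp; split => // a b Iab.
  apply: NNPP => /not_or_and [Ia Ib]; apply: Hno; by exists a, b.
have ext : forall a, ~ I a -> exists L : list (R -> Prop),
    (forall p, List.In p L -> is_prime p /\ sub I p) /\
    forall q, is_prime q -> sub I q -> q a -> exists p, List.In p L /\ sub p q.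
  move=> c Ic.
  pose J := fun x => exists i r, I i /\ x = i + r * c.
  have HJ : is_ideal J.
    case: HI => m0 mD mM; split.
    - by exists 0, 0; rewrite mul0r addr0.
    - move=> x y [i [r [Hi ->]]] [j [s [Hj ->]]]; exists (i + j), (r + s); split; first exact: mD.
      by rewrite mulrDl addrACA.
    - move=> r x [i [s [Hi ->]]]; exists (r * i), (r * s); split; first exact: mM.
      by rewrite mulrDr mulrA.
  have sIJ : sub I J by move=> x Hx; exists x, 0; split => //; rewrite mul0r addr0.
  have [L [HL1 HL2]] : exists L : list (R -> Prop),
    (forall p, List.In p L -> is_prime p /\ sub J p) /\
    forall q, is_prime q -> sub J q -> exists p, List.In p L /\ sub p q.
    apply: IH => //; exists c; split => //; exists 0, 1; split; [by case: HI | by rewrite mul1r add0r].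
  exists L; split.
    move=> p /HL1 [Hp sJp]; split => // x /sIJ /sJp //.
  move=> q Hq sIq qc; apply: HL2 => // x [i [r [Hi ->]]].
  case: Hq => [[_ qD qM] _ _]; apply: qD; [exact: sIq | exact: qM].
have [La [HLa1 HLa2]] := ext a Ia.
have [Lb [HLb1 HLb2]] := ext b Ib.
exists (List.app La Lb); split.
  by move=> p Hp; case: (List.in_app_or _ _ _ Hp) => [/HLa1|/HLb1].
move=> q Hq sIq.
have := Hq; case=> _ _ /(_ a b (sIq _ Iab)) [qa|qb].
  by have [p [Hp sp]] := HLa2 q Hq sIq qa; exists p; split => //; apply: List.in_or_app; left.
by have [p [Hp sp]] := HLb2 q Hq sIq qb; exists p; split => //; apply: List.in_or_app; right.
Qed.

Lemma min_in_list {T : Type} (le : T -> T -> Prop) :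
  (forall x, le x x) -> (forall x y z, le x y -> le y z -> le x z) ->
  forall (s : list T) x, List.In x s ->
  exists y, List.In y s /\ le y x /\ forall z, List.In z s -> le z y -> le y z.
Proof.
move=> refl tr; elim=> [|a s IH] x //=.
have step : forall y, List.In y s -> (forall z, List.In z s -> le z y -> le y z) ->
    exists y', List.In y' (a :: s) /\ le y' y /\
      forall z, List.In z (a :: s) -> le z y' -> le y' z.
  move=> y Hy Hmin.
  case: (classic (le a y /\ ~ le y a)) => [[ay nya]|Hn].
    exists a; split; [by left|split => //].
    move=> z [<-|Hz] za //; exfalso; apply: nya.
    exact: tr (Hmin z Hz (tr _ _ _ za ay)) za.
  exists y; split; [by right|split => //].
  move=> z [<-|Hz] zy; last exact: Hmin.
  by apply: NNPP => nya; apply: Hn.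
move=> [ax|Hx].
  subst x.
  case: (classic (exists z, List.In z s /\ le z a)) => [[z [Hz za]]|Hno].
    have [y [Hy [yz Hmin]]] := IH z Hz.
    have [y' [Hy' [y'y Hm']]] := step y Hy Hmin.
    by exists y'; split => //; split => //; apply: tr y'y (tr _ _ _ yz za).
  exists a; split; [by left|split => //].
  move=> z [<-|Hz] za //; by case: Hno; exists z.
have [y [Hy [yx Hmin]]] := IH x Hx.
have [y' [Hy' [y'y Hm']]] := step y Hy Hmin.
by exists y'; split => //; split => //; apply: tr y'y yx.
Qed.

Definition gspan {R : comPzRingType} {M : lmodType R} n (g : 'I_n -> M) : M -> Prop :=
  fun y => exists c : 'I_n -> R, y = \sum_(i < n) c i *: g i.

Lemma span_submod {R : comPzRingType} {M : lmodType R} n (g : 'I_n -> M) :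
  is_submod (gspan g).
Proof.
split.
- exists (fun _ => 0); rewrite big1 // => i _; by rewrite scale0r.
- move=> x y [c ->] [d ->]; exists (fun i => c i + d i); rewrite -big_split /=.
  by apply: eq_bigr => i _; rewrite scalerDl.
- move=> r x [c ->]; exists (fun i => r * c i); rewrite scaler_sumr.
  by apply: eq_bigr => i _; rewrite scalerA.
Qed.

Lemma submod_sum {R : comPzRingType} {M : lmodType R} (N : M -> Prop) n
  (c : 'I_n -> R) (g : 'I_n -> M) :
  is_submod N -> (forall i, N (g i)) -> N (\sum_(i < n) c i *: g i).
Proof.
case=> N0 ND NZ Hg; apply: (big_ind N) => // i _; exact: NZ.
Qed.

Lemma span_gen {R : comPzRingType} {M : lmodType R} n (g : 'I_n -> M) i :
  gspan g (g i).
Proof.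
exists (fun j => if j == i then 1 else 0).
rewrite (bigD1 i) //= eqxx scale1r big1 ?addr0 // => j /negbTE ->; by rewrite scale0r.
Qed.

Definition supp {R : comPzRingType} {M : lmodType R} (N : M -> Prop) (q : R -> Prop) :=
  exists x : M, forall u, ~ q u -> ~ N (u *: x).

Lemma in_suppE {R : comPzRingType} {M : lmodType R} (N : M -> Prop) (q : R -> Prop) :
  in_supp_quot N q <-> is_prime q /\ supp N q.
Proof.
split.
  by move=> [Hq [x [s [_ H]]]]; split => //; exists x.
move=> [Hq [x H]]; split => //; exists x, 1; split => //; by case: Hq.
Qed.

Lemma suppJ {R : comPzRingType} {M : lmodType R} (N : M -> Prop) (U : R -> Prop) n
  (g : 'I_n -> M) :
  is_submod N -> U 1 -> (forall a b, U a -> U b -> U (a * b)) ->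
  (forall y, exists u, U u /\ gspan g (u *: y)) ->
  is_ideal (fun r => exists u, U u /\ forall i, N ((u * r) *: g i)) /\
  forall q, is_prime q -> (forall u, U u -> ~ q u) ->
    (supp N q <-> sub (fun r => exists u, U u /\ forall i, N ((u * r) *: g i)) q).
Proof.
move=> HN U1 UM Hg; have := HN; case=> N0 ND NZ.
split.
  split.
  - exists 1; split => // i; by rewrite mulr0 scale0r.
  - move=> r s [u1 [Hu1 H1]] [u2 [Hu2 H2]]; exists (u1 * u2); split; first exact: UM.
    move=> i; have -> : (u1 * u2 * (r + s)) *: g i = u2 *: ((u1 * r) *: g i) + u1 *: ((u2 * s) *: g i).
      rewrite !scalerA -scalerDl; congr (_ *: _).
      by rewrite mulrDr [u1 * u2]mulrC -!mulrA [u1 * (u2 * s)]mulrCA.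
    apply: ND; exact: NZ.
  - move=> r' r [u [Hu H]]; exists u; split => // i.
    by rewrite mulrCA -scalerA; apply: NZ.
move=> q Hq HUq; split.
  move=> [x Hx] r [u [Hu Hr]]; apply: NNPP => qr.
  have [v [Hv [c Hc]]] := Hg x.
  apply: (Hx (u * r * v)).
    apply: prime_mul => //; last exact: HUq.
    by apply: prime_mul => //; apply: HUq.
  rewrite -scalerA Hc scaler_sumr.
  apply: (big_ind N) => // i _; rewrite scalerA mulrC -scalerA; exact: NZ.
move=> sJq; apply: NNPP => Hns.
have Hw : forall i, exists w, ~ q w /\ N (w *: g i).
  move=> i; apply: NNPP => Hno; apply: Hns; exists (g i) => w qw Nw; apply: Hno; by exists w.
pose w := fun i => proj1_sig (constructive_indefinite_description _ (Hw i)).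
have wP : forall i, ~ q (w i) /\ N (w i *: g i).
  move=> i; exact: (proj2_sig (constructive_indefinite_description _ (Hw i))).
apply: (prime_prod Hq (fun i => proj1 (wP i))); apply: sJq.
exists 1; split => // i; rewrite mul1r (bigD1 i) //= mulrC -scalerA; apply: NZ.
exact: (proj2 (wP i)).
Qed.

Lemma frac_big_snd {R : comPzRingType} {M : lmodType R} n (F : 'I_n -> M * R) :
  (\big[@frac_add R M/frac_zero M]_(i < n) F i).2 = \prod_(i < n) (F i).2.
Proof.
by apply: (big_morph snd) => //.
Qed.

Lemma frac_big_fst {R : comPzRingType} {M : lmodType R} (N : M -> Prop) n (F : 'I_n -> M * R) :
  is_submod N -> (forall i, N (F i).1) ->
  N (\big[@frac_add R M/frac_zero M]_(i < n) F i).1.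
Proof.
case=> N0 ND NZ HF.
apply: (big_ind (fun a : M * R => N a.1)) => //= a b Ha Hb.
apply: ND; exact: NZ.
Qed.

Lemma locK {R : comPzRingType} {M : lmodType R} (m : R -> Prop) :
  is_maximal m -> loc_fg M m ->
  exists n (g : 'I_n -> M), forall y, exists u, ~ m u /\ gspan g (u *: y).
Proof.
move=> Hm [n [g [d [Hd Hl]]]]; have Hp := maximal_prime Hm.
exists n, g => y.
have [a [b [Hb [v [Hv Hfe]]]]] := Hl y 1 (match Hp with And3 _ h _ => h end).
set B := \big[_/_]_(i < n) _ in Hfe.
have B2 : ~ m B.2.
  rewrite /B frac_big_snd; apply: prime_prod => // i /=; apply: prime_mul => //.
have B1 : gspan g B.1.
  apply: frac_big_fst; first exact: span_submod.
  move=> i /=; have [c Hc] := span_gen g i; exists (fun j => a i * c j).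
  by rewrite Hc scaler_sumr; apply: eq_bigr => j _; rewrite scalerA.
exists (v * B.2); split; first exact: prime_mul.
move: Hfe => /=; rewrite scale1r scalerBr => /eqP; rewrite subr_eq0 => /eqP.
rewrite scalerA => ->; case: (span_submod g) => _ _ HZ; exact: HZ.
Qed.

Definition addsub {R : comPzRingType} {M : lmodType R} (N K : M -> Prop) : M -> Prop :=
  fun y => exists a b, N a /\ K b /\ y = a + b.

Lemma addsub_submod {R : comPzRingType} {M : lmodType R} (N K : M -> Prop) :
  is_submod N -> is_submod K -> is_submod (addsub N K).
Proof.
case=> N0 ND NZ [K0 KD KZ]; split.
- by exists 0, 0; rewrite addr0.
- move=> x y [a [b [Ha [Hb ->]]]] [a' [b' [Ha' [Hb' ->]]]].
  exists (a + a'), (b + b'); do !split; [exact: ND | exact: KD | by rewrite addrACA].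
- move=> r x [a [b [Ha [Hb ->]]]]; exists (r *: a), (r *: b).
  do !split; [exact: NZ | exact: KZ | by rewrite scalerDr].
Qed.

Lemma addsub_fg {R : comPzRingType} {M : lmodType R} (N K : M -> Prop) :
  submod_fg N -> submod_fg K -> submod_fg (addsub N K).
Proof.
move=> [n [g Hg]] [k [h Hh]].
pose gh := fun i : 'I_(n + k) => match split i with inl a => g a | inr b => h b end.
have ghl : forall a, gh (lshift k a) = g a.
  by move=> a; rewrite /gh (unsplitK (inl _ a)).
have ghr : forall b, gh (rshift n b) = h b.
  by move=> b; rewrite /gh (unsplitK (inr _ b)).
exists (n + k)%N, gh => y; split.
  move=> [a [b [/Hg [c ->] [/Hh [d ->] ->]]]].
  exists (fun i => match split i with inl a => c a | inr b => d b end).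
  rewrite big_split_ord /=; congr (_ + _); apply: eq_bigr => i _.
    by rewrite ghl (unsplitK (inl _ i)).
  by rewrite ghr (unsplitK (inr _ i)).
move=> [e ->]; rewrite big_split_ord /=.
exists (\sum_(i < n) e (lshift k i) *: gh (lshift k i)),
       (\sum_(i < k) e (rshift n i) *: gh (rshift n i)); do !split.
- apply/Hg; exists (fun i => e (lshift k i)); apply: eq_bigr => i _; by rewrite ghl.
- apply/Hh; exists (fun i => e (rshift n i)); apply: eq_bigr => i _; by rewrite ghr.
Qed.

Lemma min_exists {R : comPzRingType} {M : lmodType R} (N : M -> Prop) :
  noetherian R -> (forall m : R -> Prop, is_maximal m -> loc_fg M m) -> is_submod N ->
  forall q, in_supp_quot N q -> exists p, in_min_quot N p /\ sub p q.
Proof.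
move=> HN H1 HNs q /in_suppE [Hq Hsq].
have [m [Hm sqm]] := exists_maximal HN (prime_ideal Hq) (match Hq with And3 _ h _ => h end).
have [n [g Hg]] := locK Hm (H1 m Hm).
have Hpm := maximal_prime Hm.
have [HJ HJe] := suppJ (U := fun u => ~ m u) HNs (match Hpm with And3 _ h _ => h end)
   (fun a b => prime_mul Hpm) Hg.
have HUq : forall q', sub q' m -> forall u, ~ m u -> ~ q' u.
  by move=> q' sq u Hu /sq.
have [L [HL1 HL2]] := primes_over HN HJ.
have [p0 [Hp0 p0q]] := HL2 q Hq ((HJe q Hq (HUq q sqm)).1 Hsq).
have [p [Hp [pp0 Hmin]]] := min_in_list (le := sub) (fun _ _ h => h)
   (fun x y z a b t h => b t (a t h)) Hp0.
have [Pp sJp] := HL1 p Hp.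
have pm : sub p m by move=> x /pp0 /p0q /sqm.
exists p; split; last by move=> x /pp0 /p0q.
split.
  apply/in_suppE; split => //; exact: ((HJe p Pp (HUq p pm)).2 sJp).
move=> q'' /in_suppE [Hq'' Hs''] sq''p.
have q''m : sub q'' m by move=> x /sq''p /pm.
have [p'' [Hp'' p''q'']] := HL2 q'' Hq'' ((HJe q'' Hq'' (HUq q'' q''m)).1 Hs'').
have := Hmin p'' Hp'' (fun x h => sq''p x (p''q'' x h)).
by move=> H x /H /p''q''.
Qed.

Lemma frac_big_const {R : comPzRingType} {M : lmodType R} n (v : 'I_n -> M) (t : R) :
  (\big[@frac_add R M/frac_zero M]_(i < n) (v i, t)).2 = t ^+ n /\
  t *: (\big[@frac_add R M/frac_zero M]_(i < n) (v i, t)).1 = t ^+ n *: \sum_(i < n) v i.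
Proof.
elim: n v => [|n IH] v.
  by rewrite !big_ord0 /= expr0 scaler0 scale1r.
rewrite !big_ord_recl /=; have [E2 E1] := IH (fun i => v (lift ord0 i)).
split; first by rewrite E2 exprS.
rewrite scalerDr E2 scalerA scalerA -exprS -scalerA E1 scalerA -exprS scalerDr //.
Qed.

Lemma forward {R : comPzRingType} {M : lmodType R} :
  noetherian R -> module_fg M ->
  (forall m : R -> Prop, is_maximal m -> loc_fg M m) /\
  (forall N : M -> Prop, is_submod N -> submod_fg N -> finite_ideal_set (in_min_quot N)).
Proof.
move=> HN [n [g Hg]]; split.
  move=> m Hm; have [_ m1 _] := maximal_prime Hm.
  exists n, g, (fun _ => 1); split => // y t mt.
  have [c Hc] := Hg y.
  exists c, (fun _ => t); split => //.
  rewrite /frac_scale /=.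
  have := frac_big_const (fun i => c i *: g i) t.
  under eq_bigr => i _ do rewrite mulr1.
  move=> [E2 E1]; exists 1; split => //.
  by rewrite scale1r E2 E1 -Hc subrr.
move=> N HNs _.
have Hg' : forall y, exists u : R, u = 1 /\ gspan g (u *: y).
  by move=> y; exists 1; split => //; rewrite scale1r; apply: Hg.
have [HJ HJe] := suppJ (U := fun u => u = 1) HNs (erefl _)
   (fun a b ha hb => ltac:(by rewrite ha hb mulr1)) Hg'.
have HU : forall q, is_prime q -> forall u : R, u = 1 -> ~ q u.
  by move=> q [_ q1 _] u ->.
have [L [HL1 HL2]] := primes_over HN HJ.
exists (length L), (fun i => List.nth i L (fun _ => False)).
move=> p [/in_suppE [Pp Sp] Hmin].
have [p' [Hp' p'p]] := HL2 p Pp ((HJe p Pp (HU p Pp)).1 Sp).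
have [Pp' sJp'] := HL1 p' Hp'.
have pp' := Hmin p' (proj2 (in_suppE N p') (conj Pp' ((HJe p' Pp' (HU p' Pp')).2 sJp'))) p'p.
have [k [/ltP kL kE]] := List.In_nth L p' (fun _ => False) Hp'.
exists (Ordinal kL) => x /=; rewrite kE; split; [exact: pp' | exact: p'p].
Qed.

Definition Phi {R : comPzRingType} {M : lmodType R} (N : M -> Prop) : R -> Prop :=
  fun r => forall p, in_min_quot N p -> p r.

Lemma Phi_ideal {R : comPzRingType} {M : lmodType R} (N : M -> Prop) : is_ideal (Phi N).
Proof.
split.
- by move=> p [[[[]]]].
- by move=> a b Ha Hb p Hp; have [[[[_ D _] _ _] _] _] := Hp; apply: D; [apply: Ha | apply: Hb].
- by move=> r a Ha p Hp; have [[[[_ _ Z] _ _] _] _] := Hp; apply: Z; apply: Ha.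
Qed.

Lemma Phi_mono {R : comPzRingType} {M : lmodType R} (N N' : M -> Prop) :
  noetherian R -> (forall m : R -> Prop, is_maximal m -> loc_fg M m) ->
  is_submod N -> sub N N' -> sub (Phi N) (Phi N').
Proof.
move=> HN H1 HNs sNN' r Hr p' [/in_suppE [Pp' [x Hx]] _].
have [p [Hp pp']] : exists p, in_min_quot N p /\ sub p p'.
  apply: min_exists => //; apply/in_suppE; split => //; exists x => u pu /sNN'.
  exact: Hx.
by apply: pp'; apply: Hr.
Qed.

Lemma reverse {R : comPzRingType} {M : lmodType R} :
  noetherian R ->
  (forall m : R -> Prop, is_maximal m -> loc_fg M m) ->
  (forall N : M -> Prop, is_submod N -> submod_fg N -> finite_ideal_set (in_min_quot N)) ->
  module_fg M.
Proof.
move=> HN H1 H2.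
have main : forall I, is_ideal I -> forall N : M -> Prop, is_submod N -> submod_fg N ->
    sub I (Phi N) -> module_fg M.
  apply: noeth_ind => // I HI IH N HNs HNfg sIP.
  case: (classic (exists p0, in_min_quot N p0)) => [[p0 Hp0]|Hno].
  - have [/in_suppE [Pp0 _] _] := Hp0.
    have [m [Hm sp0m]] := exists_maximal HN (prime_ideal Pp0)
        (match Pp0 with And3 _ h _ => h end).
    have [nK [gK HK]] := locK Hm (H1 m Hm).
    pose N' := addsub N (gspan gK).
    have HN's : is_submod N' := addsub_submod HNs (span_submod gK).
    have HN'fg : submod_fg N' by apply: addsub_fg => //; exists nK, gK.
    have sNN' : sub N N'.
      by move=> a Ha; exists a, 0; do !split => //; [case: (span_submod gK) | rewrite addr0].
    have nsub : ~ sub (Phi N') p0.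
      move=> sPp0; have [k [f Hf]] := H2 N' HN's HN'fg.
      have [p' [Hp' p'p0]] : exists p', in_min_quot N' p' /\ sub p' p0.
        apply: NNPP => Hno.
        have Ha : forall i, exists a, ~ p0 a /\
            forall p', in_min_quot N' p' -> (forall x, p' x <-> f i x) -> p' a.
          move=> i; case: (classic (exists p', in_min_quot N' p' /\ forall x, p' x <-> f i x)).
            move=> [p' [Hp' Hpf]].
            have [a [p'a np0a]] : exists a, p' a /\ ~ p0 a.
              apply: NNPP => Hn; apply: Hno; exists p'; split => // x p'x.
              by apply: NNPP => np0; apply: Hn; exists x.
            exists a; split => // p'' _ Hpf''; by apply/Hpf''; apply/Hpf.
          move=> Hn; exists 1; split; first by case: Pp0.
          move=> p'' Hp'' Hpf''; by case: Hn; exists p''.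
        pose a := fun i => proj1_sig (constructive_indefinite_description _ (Ha i)).
        have aP : forall i, ~ p0 (a i) /\
            forall p', in_min_quot N' p' -> (forall x, p' x <-> f i x) -> p' (a i).
          move=> i; exact: (proj2_sig (constructive_indefinite_description _ (Ha i))).
        apply: (prime_prod Pp0 (fun i => proj1 (aP i))); apply: sPp0.
        move=> p' Hp'; have [i Hi] := Hf p' Hp'.
        have [[Pp' _] _] := Hp'; have := Hp'; move=> [/in_suppE [Pp'' _] _].
        rewrite (bigD1 i) //=; apply: ideal_mulr; first exact: prime_ideal.
        exact: (proj2 (aP i) p' Hp' Hi).
      have [/in_suppE [Pp' [x Hx]] _] := Hp'.
      have [u [mu Hu]] := HK x.
      apply: (Hx u); first by move=> /p'p0 /sp0m.
      exists 0, (u *: x); do !split => //; [by case: HNs | by rewrite add0r].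
    have [x [Px np0x]] : exists x, Phi N' x /\ ~ p0 x.
      apply: NNPP => Hn; apply: nsub => x Px; apply: NNPP => np0; apply: Hn; by exists x.
    apply: (IH (Phi N') (Phi_ideal N') _ _ N' HN's HN'fg) => //.
    + move=> y /sIP; exact: (Phi_mono HN H1 HNs sNN').
    + exists x; split => // /sIP Ix; apply: np0x; exact: Ix.
  - have Nall : forall y, N y.
      move=> y; apply: NNPP => Ny.
      have Hann : is_ideal (fun u => N (u *: y)).
        case: HNs => N0 ND NZ; split.
        + by rewrite scale0r.
        + by move=> a b Ha Hb; rewrite scalerDl; apply: ND.
        + by move=> r a Ha; rewrite -scalerA; apply: NZ.
      have Hann1 : ~ N (1 *: y) by rewrite scale1r.
      have [mx [Hm sam]] := exists_maximal HN Hann Hann1.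
      have [p [Hp _]] : exists p, in_min_quot N p /\ sub p mx.
        apply: min_exists => //; apply/in_suppE; split; first exact: maximal_prime.
        by exists y => u mxu /sam.
      by apply: Hno; exists p.
    have [n [g Hg]] := HNfg; exists n, g => y; exact: (proj1 (Hg y) (Nall y)).
apply: (main (fun x => x = 0)) (fun y => y = 0) _ _ _.
- split => //; [by move=> a b -> ->; rewrite addr0 | by move=> r a ->; rewrite mulr0].
- split => //; [by move=> a b -> ->; rewrite addr0 | by move=> r a ->; rewrite scaler0].
- exists 0%N, (fun _ => 0) => y; split.
    by move=> ->; exists (fun _ => 0); rewrite big_ord0.
  by move=> [c ->]; rewrite big_ord0.
- by move=> x -> p [/in_suppE [[[]]]].
Qed.

Theorem proposition2p1 (R : comPzRingType) (M : lmodType R) :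
  noetherian R ->
  (module_fg M <->
   ((forall m : R -> Prop, is_maximal m -> loc_fg M m) /\
    (forall N : M -> Prop, is_submod N -> submod_fg N ->
       finite_ideal_set (in_min_quot N)))).
Proof.
move=> HN; split; first exact: forward.
by move=> [H1 H2]; apply: reverse.
Qed.
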